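(* For fixed nonnegative integers $r,s$, the quantity $$\frac{1}{n!}\sum_{\pi\in S_n}\mathrm{inv}(\pi)^r\,\mathrm{maj}(\pi)^s$$ is, for $n\ge1$, given by a polynomial in $n$ (with rational coefficients). Likewise, for fixed $r,s$, the factorial moment $FM(r,s)(n,i)$ defined below is given by a polynomial in $(n,i)$ for all $1\le i\le n$.
   Context: For a permutation $\pi=\pi_1\cdots\pi_n$ of $\{1,\dots,n\}$: $\mathrm{inv}(\pi)$ is the number of pairs $1\le i<j\le n$ with $\pi_i>\pi_j$, and $\mathrm{maj}(\pi)$ is the sum of all positions $i\in\{1,\dots,n-1\}$ with $\pi_i>\pi_{i+1}$. Let $z^{(k)}=z(z-1)\cdots(z-k+1)$ denote the falling factorial ($z^{(0)}=1$). For $1\le i\le n$ let $\mu_{n,i}=n-i+(n-1)(n-2)/4$ and $$FM(r,s)(n,i)=\frac{1}{(n-1)!}\sum_{\pi\in S_n,\ \pi_n=i}(\mathrm{inv}(\pi)-\mu_{n,i})^{(r)}(\mathrm{maj}(\pi)-\mu_{n,i})^{(s)} .$$ *)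

(* Defs.v *)
From HB Require Import structures.
From mathcomp Require Import all_boot all_order all_algebra all_fingroup.
Set Implicit Arguments. Unset Strict Implicit. Unset Printing Implicit Defensive.
Import Order.TTheory GRing.Theory Num.Theory.

(* Permutations of {1..n} are modelled by 'S_n = {perm 'I_n}; position p
   (1-indexed) corresponds to the ordinal p-1, value v to ordinal v-1. *)

Definition inv_perm (n : nat) (s : 'S_n) : nat :=
  #|[set p : 'I_n * 'I_n | (p.1 < p.2)%N && (s p.2 < s p.1)%N]|.

Definition maj_perm (n : nat) (s : 'S_n) : nat :=
  \sum_(i < n) \sum_(j < n | (val j == (val i).+1) && (s j < s i)%N) (val i).+1.

Local Open Scope ring_scope.

Definition falling (z : rat) (k : nat) : rat := \prod_(j < k) (z - j%:R).

Definition mu (n i : nat) : rat :=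
  n%:R - i%:R + (n%:R - 1) * (n%:R - 2) / 4%:R.

(* FM(r,s)(n,i): sum over permutations with pi_n = i (1-indexed), i.e.
   the value at the last position (ordinal n-1) is the ordinal i-1. *)
Definition FM (r s n i : nat) : rat :=
  ((n.-1)`!%:R)^-1 *
  \sum_(p : 'S_n | [exists k : 'I_n, (val k == n.-1) && (val (p k) == i.-1)])
     falling ((inv_perm p)%:R - mu n i) r * falling ((maj_perm p)%:R - mu n i) s.

(* Main.v *)
Require Import Defs.
From HB Require Import structures.
From mathcomp Require Import all_boot all_order all_algebra all_fingroup.
From Stdlib Require Import Lia.
Set Implicit Arguments. Unset Strict Implicit. Unset Printing Implicit Defensive.
Import Order.TTheory GRing.Theory Num.Theory.

Lemma ltn_bump2 h i j : (bump h i < bump h j) = (i < j).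
Proof. by rewrite !ltnNge leq_bump2. Qed.

Lemma inv_sum n (s : 'S_n) :
  inv_perm s = \sum_(u < n) \sum_(v < n) ((u < v) && (s v < s u)).
Proof.
rewrite /inv_perm -sum1_card pair_big /= big_mkcond /=.
by apply: eq_bigr => p _; rewrite inE; case: ifP.
Qed.

Lemma widen_max n (k : 'I_n) : widen_ord (leqnSn n) k = lift ord_max k.
Proof. by apply: ord_inj; rewrite lift_max. Qed.

Lemma bump_lt h i : (i < h)%N -> bump h i = i.
Proof. by move=> hi; rewrite /bump leqNgt hi. Qed.

Lemma ltn_bump_self h i : (h < bump h i) = (h <= i).
Proof. rewrite /bump; case: (leqP h i) => hi /=; first by rewrite add1n ltnS.
by rewrite add0n ltnNge ltnW. Qed.

Lemma sum_geq n j : \sum_(k < n) (j <= k) = (n - j)%N.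
Proof.
elim: n => [|n IH]; first by rewrite big_ord0.
rewrite big_ord_recr /= IH; case: (leqP j n) => h.
  by rewrite subSn // addn1.
have e1 : (n - j = 0)%N by apply/eqP; rewrite subn_eq0 ltnW.
have e2 : (n.+1 - j = 0)%N by apply/eqP; rewrite subn_eq0.
by rewrite e1 e2.
Qed.

Lemma inv_lift n (j : 'I_n.+1) (s : 'S_n) :
  inv_perm (lift_perm ord_max j s) = (inv_perm s + (n - j))%N.
Proof.
rewrite !inv_sum big_ord_recr /=.
have H1 : \sum_(v < n.+1) ((n < v) && (lift_perm ord_max j s v < lift_perm ord_max j s ord_max)) = 0%N.
  by apply: big1 => v _; rewrite ltnNge -ltnS ltn_ord.
rewrite H1 addn0.
rewrite (eq_bigr (fun u : 'I_n => \sum_(v < n) ((u < v) && (s v < s u)) + (j <= s u))%N); last first.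
  move=> u _; rewrite big_ord_recr !widen_max !lift_perm_lift lift_perm_id /=.
  rewrite ltn_ord ltn_bump_self /=; congr (_ + _)%N.
  apply: eq_bigr => v _; rewrite !widen_max !lift_perm_lift /=.
rewrite ltn_bump2 //.
rewrite big_split /=; congr (_ + _)%N.
by rewrite -(sum_geq n j) [RHS](reindex_inj (@perm_inj _ s)).
Qed.

Lemma maj_sum n (s : 'S_n) :
  maj_perm s = \sum_(u < n) \sum_(v < n) ((v == u.+1 :> nat) && (s v < s u)) * u.+1.
Proof.
rewrite /maj_perm; apply: eq_bigr => u _; rewrite big_mkcond /=.
by apply: eq_bigr => v _; case: ifP; rewrite ?mul1n ?mul0n.
Qed.

Definition chi n (s : 'S_n) (j : nat) : bool :=
  [exists k : 'I_n, (val k == n.-1) && (j <= s k)].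

Lemma sum_last n (s : 'S_n) (j : nat) :
  \sum_(u < n) ((n == u.+1) && (j <= s u)) * u.+1 = (if chi s j then n else 0).
Proof.
case: n s => [|m] s; first by rewrite big_ord0 /chi; case: existsP => // [[[]]].
rewrite big_ord_recr /= eqxx /= big1 ?add0n; last first.
  by move=> u _; rewrite /= eqSS eqn_leq leqNgt ltn_ord /= mul0n.
rewrite /chi; case: existsP => [[k /andP[/eqP hk hj]]|hn].
  by rewrite (_ : ord_max = k) ?hj ?mul1n //; apply: val_inj.
case hj: (j <= s ord_max) => //=; exfalso; apply: hn; exists ord_max.
by rewrite eqxx hj.
Qed.

Lemma maj_lift n (j : 'I_n.+1) (s : 'S_n) :
  maj_perm (lift_perm ord_max j s) = (maj_perm s + (if chi s j then n else 0))%N.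
Proof.
rewrite !maj_sum big_ord_recr /=.
rewrite [X in (_ + X)%N]big1 ?addn0; last first.
  move=> v _; have hv : (v != n.+1 :> nat) by rewrite neq_ltn ltn_ord.
  by rewrite (negbTE hv) mul0n.
rewrite -(sum_last s j) -big_split /=.
apply: eq_bigr => u _.
rewrite big_ord_recr !widen_max !lift_perm_lift lift_perm_id /=.
rewrite ltn_bump_self; congr (_ + _)%N.
apply: eq_bigr => v _; rewrite !widen_max !lift_perm_lift /= ltn_bump2.
by [].
Qed.

Local Open Scope ring_scope.
Lemma reindex_lift (R : nmodType) n (i0 j0 : 'I_n.+1) (F : 'S_n.+1 -> R) :
  \sum_(s : 'S_n.+1 | s i0 == j0) F s = \sum_(s : 'S_n) F (lift_perm i0 j0 s).
Proof.
rewrite (reindex (lift_perm i0 j0)); last first.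
  pose ulsf i (s : 'S_n.+1) k := odflt k (unlift (s i) (s (lift i k))).
  have ulsfK i (s : 'S_n.+1) k: lift (s i) (ulsf i s k) = s (lift i k).
    rewrite /ulsf; have:= neq_lift i k.
    by rewrite -(can_eq (permK s)) => /unlift_some[] ? ? ->.
  have inj_ulsf: injective (ulsf i0 _).
    move=> s; apply: can_inj (ulsf (s i0) s^-1%g) _ => k'.
    by rewrite {1}/ulsf ulsfK !permK liftK.
  exists (fun s => perm (inj_ulsf s)) => [s _ | s].
    by apply/permP=> k'; rewrite permE /ulsf lift_perm_lift lift_perm_id liftK.
  move/(s _ =P _) => si0; apply/permP=> k.
  case: (unliftP i0 k) => [k'|] ->; rewrite ?lift_perm_id //.
  by rewrite lift_perm_lift -si0 permE ulsfK.
by apply: eq_bigl => s; rewrite lift_perm_id eqxx.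
Qed.

Local Open Scope ring_scope.

Definition ev (Q : {poly {poly rat}}) (x y : rat) : rat := Q.[y%:P].[x].
Definition bp (f : rat -> rat -> rat) := exists Q, forall x y, f x y = ev Q x y.

Lemma bp_ext f g : (forall x y, f x y = g x y) -> bp f -> bp g.
Proof. by move=> e [Q hQ]; exists Q => x y; rewrite -e hQ. Qed.

Lemma bp_const c : bp (fun _ _ => c).
Proof. by exists ((c%:P)%:P) => x y; rewrite /ev !hornerC. Qed.

Lemma bp_x : bp (fun x _ => x).
Proof. by exists (('X)%:P) => x y; rewrite /ev hornerC hornerX. Qed.

Lemma bp_y : bp (fun _ y => y).
Proof. by exists 'X => x y; rewrite /ev hornerX hornerC. Qed.

Lemma bp_add f g : bp f -> bp g -> bp (fun x y => f x y + g x y).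
Proof.
by move=> [P hP] [Q hQ]; exists (P + Q) => x y; rewrite /ev !hornerD hP hQ.
Qed.

Lemma bp_mul f g : bp f -> bp g -> bp (fun x y => f x y * g x y).
Proof.
by move=> [P hP] [Q hQ]; exists (P * Q) => x y; rewrite /ev !hornerM hP hQ.
Qed.

Lemma bp_opp f : bp f -> bp (fun x y => - f x y).
Proof.
move=> hf; apply: bp_ext (bp_mul (bp_const (-1)) hf) => x y.
by rewrite mulN1r.
Qed.

Lemma bp_sub f g : bp f -> bp g -> bp (fun x y => f x y - g x y).
Proof. by move=> hf hg; apply: bp_add hf (bp_opp hg). Qed.

Lemma bp_exp f k : bp f -> bp (fun x y => f x y ^+ k).
Proof.
move=> hf; elim: k => [|k IH]; first by apply: bp_ext (bp_const 1) => x y.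
by apply: bp_ext (bp_mul IH hf) => x y; rewrite exprSr.
Qed.

Lemma bp_sum d (F : nat -> rat -> rat -> rat) :
  (forall i, (i < d)%N -> bp (F i)) -> bp (fun x y => \sum_(i < d) F i x y).
Proof.
elim: d => [|d IH] hF.
  by apply: bp_ext (bp_const 0) => x y; rewrite big_ord0.
apply: bp_ext (bp_add (IH (fun i hi => hF i (ltnW hi))) (hF d (ltnSn d))) => x y.
by rewrite big_ord_recr.
Qed.

Lemma bp_poly1 (P : {poly rat}) u : bp u -> bp (fun x y => P.[u x y]).
Proof.
move=> hu; apply: bp_ext (bp_sum (F := fun i x y => P`_i * u x y ^+ i) _) => [x y|i _].
  by rewrite [RHS]horner_coef.
exact: bp_mul (bp_const _) (bp_exp _ hu).
Qed.

Lemma ev_expand Q x y : ev Q x y = \sum_(k < size Q) (Q`_k).[x] * y ^+ k.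
Proof.
rewrite /ev (horner_coef Q) horner_sum; apply: eq_bigr => k _.
by rewrite hornerM horner_exp hornerC.
Qed.

Lemma bp_comp f u v : bp f -> bp u -> bp v -> bp (fun x y => f (u x y) (v x y)).
Proof.
move=> [Q hQ] hu hv.
apply: bp_ext (bp_sum (F := fun k x y => (Q`_k).[u x y] * v x y ^+ k) _) => [x y|k _].
  by rewrite hQ ev_expand.
exact: bp_mul (bp_poly1 _ hu) (bp_exp _ hv).
Qed.

Lemma bp_x' f : bp f -> bp (fun x _ => f x 0).
Proof. by move=> hf; apply: bp_comp hf bp_x (bp_const 0). Qed.

Definition nbp (F : rat -> nat -> rat) := exists g, bp g /\ forall x (m : nat), g x m%:R = F x m.

Lemma nbp_bp f : bp f -> nbp (fun x m => f x m%:R).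
Proof. by move=> hf; exists f. Qed.

Lemma nbp_ext F G : (forall x m, F x m = G x m) -> nbp F -> nbp G.
Proof. by move=> e [g [hg hG]]; exists g; split => // x m; rewrite hG e. Qed.

Lemma nbp_add F G : nbp F -> nbp G -> nbp (fun x m => F x m + G x m).
Proof.
by move=> [f [hf eF]] [g [hg eG]]; exists (fun x y => f x y + g x y); split;
  [exact: bp_add | move=> x m; rewrite eF eG].
Qed.

Lemma nbp_mul F G : nbp F -> nbp G -> nbp (fun x m => F x m * G x m).
Proof.
by move=> [f [hf eF]] [g [hg eG]]; exists (fun x y => f x y * g x y); split;
  [exact: bp_mul | move=> x m; rewrite eF eG].
Qed.

Lemma nbp_sum d (F : nat -> rat -> nat -> rat) :
  (forall i, (i < d)%N -> nbp (F i)) -> nbp (fun x m => \sum_(i < d) F i x m).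
Proof.
elim: d => [|d IH] hF.
  by apply: nbp_ext (nbp_bp (bp_const 0)) => x m; rewrite big_ord0.
apply: nbp_ext (nbp_add (IH (fun i hi => hF i (ltnW hi))) (hF d (ltnSn d))) => x m.
by rewrite big_ord_recr.
Qed.

Lemma nbp_sub F G : nbp F -> nbp G -> nbp (fun x m => F x m - G x m).
Proof.
by move=> [f [hf eF]] [g [hg eG]]; exists (fun x y => f x y - g x y); split;
  [exact: bp_sub | move=> x m; rewrite eF eG].
Qed.

Definition Sf (e m : nat) : rat := \sum_(k < m) (k%:R) ^+ e.

Lemma tele e m :
  (m%:R : rat) ^+ e.+1 = \sum_(t < e.+1) 'C(e.+1, t)%:R * Sf t m.
Proof.
elim: m => [|m IH].
  rewrite expr0n /=; symmetry; apply: big1 => t _.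
  by rewrite /Sf big_ord0 mulr0.
rewrite -natr1 exprD1n big_ord_recr /= binn mulr1n IH.
have SfS t : Sf t m.+1 = Sf t m + m%:R ^+ t by rewrite /Sf big_ord_recr.
under [RHS]eq_bigr => t _ do rewrite SfS mulrDr.
rewrite big_split /= addrC; congr (_ + _).
by apply: eq_bigr => t _; rewrite mulr_natl.
Qed.

Lemma faul e : nbp (fun _ m => Sf e m).
Proof.
elim/ltn_ind: e => e IH.
have h1 : nbp (fun _ m => \sum_(t < e) 'C(e.+1,t)%:R * Sf t m).
  apply: (nbp_sum (F := fun t _ m => 'C(e.+1,t)%:R * Sf t m)) => t ht; apply: (nbp_mul (F := fun _ _ => 'C(e.+1,t)%:R)).
    exact: (nbp_bp (bp_const _)).
  exact: IH.
have h2 := nbp_sub (nbp_bp (bp_exp e.+1 bp_y)) h1.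
apply: nbp_ext (nbp_mul (nbp_bp (bp_const (e.+1%:R)^-1)) h2) => x m /=.
rewrite tele big_ord_recr /= binSn [X in X - _]addrC addrK mulKf //.
by rewrite pnatr_eq0.
Qed.

Lemma bp_psum f : bp f -> nbp (fun x m => \sum_(k < m) f x k%:R).
Proof.
move=> [Q hQ].
have h : nbp (fun x m => \sum_(e < size Q) (Q`_e).[x] * Sf e m).
  apply: (nbp_sum (F := fun e x m => (Q`_e).[x] * Sf e m)) => e _.
  apply: (nbp_mul (F := fun x _ => (Q`_e).[x])); last exact: faul.
  exact: (nbp_bp (bp_poly1 _ bp_x)).
apply: nbp_ext h => x m.
under [RHS]eq_bigr => k _ do rewrite hQ ev_expand.
rewrite exchange_big /=; apply: eq_bigr => e _.
by rewrite /Sf mulr_sumr.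
Qed.

Lemma bp_div1 u : bp u -> u (-1) 0 = 0 ->
  exists w, bp w /\ forall x, x != -1 -> w x 0 = u x 0 / (x + 1).
Proof.
move=> [Q hQ] h0.
have eW : forall x, u x 0 = (Q.[0]).[x] by move=> x; rewrite hQ /ev polyC0.
have : root (Q.[0]) (-1) by rewrite /root -eW h0.
move=> /factor_theorem [V eV].
exists (fun x _ => V.[x]); split; first by apply: bp_ext (bp_poly1 V bp_x).
move=> x hx; rewrite eW eV hornerM !hornerE opprK mulfK //.
by rewrite addr_eq0.
Qed.

Local Open Scope ring_scope.

Definition St n (s : 'S_n) a b : rat := (inv_perm s)%:R ^+ a * (maj_perm s)%:R ^+ b.
Definition Aq a b n : rat := (n`!%:R)^-1 * \sum_(s : 'S_n) St s a b.
Definition Gq a b n j : rat :=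
  (n`!%:R)^-1 * \sum_(s : 'S_n.+1 | val (s ord_max) == j) St s a b.
Definition Kq a b n j : rat := \sum_(k < n | (j <= k)%N) Gq a b n.-1 k.
Definition Xq a b n j : rat := (n`!%:R)^-1 * \sum_(s : 'S_n)
   (inv_perm s)%:R ^+ a * ((maj_perm s)%:R + (if chi s j then n%:R else 0)) ^+ b.

Lemma part_last n (P : pred nat) (F : 'S_n.+1 -> rat) :
  \sum_(s : 'S_n.+1 | P (val (s ord_max))) F s =
  \sum_(k < n.+1 | P k) \sum_(s : 'S_n.+1 | val (s ord_max) == k) F s.
Proof.
rewrite (partition_big (fun s : 'S_n.+1 => s ord_max) (fun k : 'I_n.+1 => P k)) //.
apply: eq_bigr => k hk; apply: eq_bigl => s.
by rewrite val_eqE; case: eqP => [->|]; rewrite ?hk ?andbF.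
Qed.

Lemma fact_inv n : ((n.+1)`!%:R : rat)^-1 * n.+1%:R = (n`!%:R)^-1.
Proof.
rewrite factS natrM invfM mulrAC mulVf ?mul1r //.
by rewrite pnatr_eq0.
Qed.

Lemma Aq_rec a b n : Aq a b n.+1 = (n.+1%:R)^-1 * \sum_(k < n.+1) Gq a b n k.
Proof.
rewrite /Aq /Gq.
have -> : \sum_(s : 'S_n.+1) St s a b = \sum_(s : 'S_n.+1 | predT (val (s ord_max))) St s a b by [].
rewrite part_last mulr_sumr mulr_sumr; apply: eq_bigr => k _.
by rewrite mulrA factS natrM invfM.
Qed.

Lemma chi_last m (s : 'S_m.+1) j : chi s j = (j <= s ord_max)%N.
Proof.
rewrite /chi; apply/existsP/idP => [[k /andP[/eqP hk hj]]|hj].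
  by rewrite (_ : ord_max = k) //; apply: val_inj.
by exists ord_max; rewrite eqxx hj.
Qed.

Lemma Kq_chi a b n j :
  (n`!%:R)^-1 * n%:R * \sum_(s : 'S_n | chi s j) St s a b = Kq a b n j.
Proof.
case: n => [|m]; first by rewrite mulr0 mul0r /Kq big_ord0.
rewrite fact_inv /Kq /Gq.
rewrite (eq_bigl (fun s : 'S_m.+1 => j <= val (s ord_max))%N); last by move=> s; rewrite chi_last.
by rewrite (part_last (fun k => j <= k)%N) mulr_sumr.
Qed.

Lemma Gq_lift a b n (j : nat) : (j <= n)%N ->
  Gq a b n j = (n`!%:R)^-1 * \sum_(s : 'S_n)
     ((inv_perm s)%:R + (n%:R - j%:R)) ^+ a *
     ((maj_perm s)%:R + (if chi s j then n%:R else 0)) ^+ b.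
Proof.
move=> hj; have hJ : (j < n.+1)%N by [].
rewrite /Gq (eq_bigl (fun s : 'S_n.+1 => s ord_max == Ordinal hJ)); last first.
  by move=> s; rewrite -val_eqE.
rewrite reindex_lift; congr (_ * _); apply: eq_bigr => s _.
rewrite /St inv_lift maj_lift natrD natrB // natrD.
by case: (chi s j).
Qed.

Lemma ac5 (R : comNzRingType) (f I c C M : R) : f * ((C * (I * c)) * M) = C * c * (f * (I * M)).
Proof.
rewrite -(mulrA C) (mulrAC I c M) (mulrCA f C) (mulrC (I * M) c) (mulrCA f c).
by rewrite mulrA.
Qed.

Lemma GX a b n j : (j <= n)%N ->
  Gq a b n j = \sum_(i < a.+1) 'C(a,i)%:R * (n%:R - j%:R) ^+ i * Xq (a - i) b n j.
Proof.
move=> hj; rewrite Gq_lift //.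
under eq_bigr => s _ do rewrite exprDn mulr_suml.
rewrite exchange_big mulr_sumr /=; apply: eq_bigr => i _.
rewrite /Xq mulr_sumr [in RHS]mulr_sumr [in RHS]mulr_sumr; apply: eq_bigr => s _.
by rewrite -[_ *+ 'C(a, i)]mulr_natl ac5.
Qed.

Lemma ac6 (R : comNzRingType) (f I M x : R) i C :
  f * (I * (M * x ^+ i.+1 *+ C)) = C%:R * x ^+ i * (f * x * (I * M)).
Proof.
rewrite -mulr_natl exprSr !mulrA.
by rewrite [LHS](ACl (3*5*1*6*2*4)%AC).
Qed.

Lemma XK a b n j : Xq a b n j =
  Aq a b n + \sum_(i < b) 'C(b, i.+1)%:R * n%:R ^+ i * Kq a (b - i.+1) n j.
Proof.
rewrite /Xq.
under eq_bigr => s _ do rewrite exprDn big_ord_recl /= subn0 expr0 mulr1 bin0 mulr1n mulrDr.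
rewrite big_split mulrDr /=; congr (_ + _).
under [RHS]eq_bigr => i _ do rewrite -Kq_chi big_mkcond mulr_sumr mulr_sumr.
under eq_bigr => s _ do rewrite mulr_sumr.
rewrite exchange_big /=.
rewrite mulr_sumr; apply: eq_bigr => i _.
rewrite mulr_sumr; apply: eq_bigr => s _.
have -> : bump 0 i = i.+1 by rewrite /bump leq0n add1n.
rewrite /St; case: ifP => _.
  by rewrite ac6.
by rewrite expr0n /= !(mulr0, mul0rn).
Qed.

Local Open Scope ring_scope.

Definition bpD (D : nat -> nat -> bool) (f : nat -> nat -> rat) :=
  exists g, bp g /\ forall n j, D n j -> f n j = g n%:R j%:R.

Section BPD.
Variable D : nat -> nat -> bool.

Lemma bpD_bp g : bp g -> bpD D (fun n j => g n%:R j%:R).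
Proof. by move=> hg; exists g. Qed.

Lemma bpD_ext f h : (forall n j, D n j -> f n j = h n j) -> bpD D f -> bpD D h.
Proof. by move=> e [g [hg eg]]; exists g; split => // n j hD; rewrite -e // eg. Qed.

Lemma bpD_add f h : bpD D f -> bpD D h -> bpD D (fun n j => f n j + h n j).
Proof.
move=> [f' [hf ef]] [h' [hh eh]]; exists (fun x y => f' x y + h' x y).
by split; [exact: bp_add | move=> n j hD; rewrite ef ?eh].
Qed.

Lemma bpD_mul f h : bpD D f -> bpD D h -> bpD D (fun n j => f n j * h n j).
Proof.
move=> [f' [hf ef]] [h' [hh eh]]; exists (fun x y => f' x y * h' x y).
by split; [exact: bp_mul | move=> n j hD; rewrite ef ?eh].
Qed.

Lemma bpD_sum d (F : nat -> nat -> nat -> rat) :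
  (forall i, (i < d)%N -> bpD D (F i)) -> bpD D (fun n j => \sum_(i < d) F i n j).
Proof.
elim: d => [|d IH] hF.
  by apply: bpD_ext (bpD_bp (bp_const 0)) => n j _; rewrite big_ord0.
apply: bpD_ext (bpD_add (IH (fun i hi => hF i (ltnW hi))) (hF d (ltnSn d))) => n j _.
by rewrite big_ord_recr.
Qed.
End BPD.

Definition le2 (n j : nat) : bool := (j <= n)%N.
Definition PA a b := exists u, bp u /\ forall n, Aq a b n = u n%:R 0.
Definition PG a b := bpD le2 (Gq a b).

Lemma PA_bpD a b : PA a b -> bpD le2 (fun n _ => Aq a b n).
Proof.
move=> [u [hu eu]]; apply: (bpD_ext (f := fun n j => u n%:R 0)); last exact: bpD_bp (bp_x' hu).
by move=> n j _; rewrite eu.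
Qed.

Lemma sum_split_geq (F : nat -> rat) N j : (j <= N)%N ->
  \sum_(k < N | (j <= k)%N) F k = \sum_(k < N) F k - \sum_(k < j) F k.
Proof.
move=> hj; rewrite (big_ord_widen _ F hj) [X in X - _](bigID (fun k : 'I_N => (k < j)%N)) /=.
rewrite addrC addrK; apply: eq_bigl => k; by rewrite -leqNgt.
Qed.

Lemma K_poly a b : PG a b -> bpD le2 (Kq a b).
Proof.
move=> [g [hg eg]].
have [s [hs es]] := bp_psum hg.
have hK : bp (fun x y => s (x - 1) x - s (x - 1) y).
  apply: bp_sub; first exact: bp_comp hs (bp_sub bp_x (bp_const 1)) bp_x.
  exact: bp_comp hs (bp_sub bp_x (bp_const 1)) bp_y.
exists (fun x y => s (x - 1) x - s (x - 1) y); split => // n j.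
rewrite /le2 /Kq; case: n => [|m] hj.
  by rewrite big_ord0 (eqP (_ : j == 0)%N) ?subrr // -leqn0.
rewrite sum_split_geq //= -natr1 addrK natr1 es es; congr (_ - _).
  by apply: eq_bigr => k _; rewrite eg // /le2 -ltnS.
by apply: eq_bigr => k _; rewrite eg // /le2 -ltnS (leq_trans _ hj).
Qed.



Lemma bpD_of (D : nat -> nat -> bool) g h : bp g -> (forall n j, D n j -> h n j = g n%:R j%:R) -> bpD D h.
Proof. by move=> hg e; exists g. Qed.

Definition Kt a b n j : rat :=
  \sum_(i < b) 'C(b, i.+1)%:R * n%:R ^+ i * Kq a (b - i.+1) n j.

Lemma bpD_n (D : nat -> nat -> bool) k : bpD D (fun n _ => n%:R ^+ k).
Proof. by apply: (bpD_of (bp_exp k bp_x)). Qed.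

Lemma bpD_c (D : nat -> nat -> bool) c : bpD D (fun _ _ => c).
Proof. by apply: (bpD_of (bp_const c)). Qed.

Lemma step a b :
  (forall a' b', (a' + b' < a + b)%N -> PA a' b' /\ PG a' b') -> PA a b /\ PG a b.
Proof.
move=> IH.
have hKt : forall a', (a' <= a)%N -> bpD le2 (Kt a' b).
  move=> a' ha; apply: (bpD_sum (F := fun i n j => 'C(b, i.+1)%:R * n%:R ^+ i * Kq a' (b - i.+1) n j)) => i hi.
  apply: (bpD_mul (f := fun n _ => 'C(b, i.+1)%:R * n%:R ^+ i)).
    exact: (bpD_mul (bpD_c _ _) (bpD_n _ _)).
  apply: K_poly; apply: (IH _ _ _).2.
  move: ha hi => /ssrnat.leP h1 /ssrnat.leP h2; apply/ssrnat.leP; rewrite -?plusE -?minusE; lia.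
have hX : forall a', (a' < a)%N -> bpD le2 (Xq a' b).
  move=> a' ha; apply: (bpD_ext _ (bpD_add (PA_bpD (IH a' b _).1) (hKt a' (ltnW ha)))).
    by move=> n j _; rewrite XK.
  by rewrite ltn_add2r.
have hZ : bpD le2 (fun n j => Gq a b n j - Aq a b n).
  apply: (bpD_ext (f := fun n j => Kt a b n j + \sum_(i < a)
      'C(a, i.+1)%:R * (n%:R - j%:R) ^+ i.+1 * Xq (a - i.+1) b n j)).
    move=> n j hj; rewrite GX // big_ord_recl /= bin0 expr0 mulr1 subn0 XK.
    rewrite /Kt mul1r addrAC (addrC (Aq a b n)) addrK; congr (_ + _).
  apply: bpD_add; first exact: hKt.
  apply: (bpD_sum (F := fun i n j => 'C(a, i.+1)%:R * (n%:R - j%:R) ^+ i.+1 * Xq (a - i.+1) b n j)) => i hi.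
  apply: (bpD_mul (f := fun n j => 'C(a, i.+1)%:R * (n%:R - j%:R) ^+ i.+1)).
    apply: (bpD_mul (bpD_c _ _)).
    by apply: (bpD_of (bp_exp i.+1 (bp_sub bp_x bp_y))).
  apply: hX; move: hi => /ssrnat.leP h1; apply/ssrnat.leP; rewrite -?minusE; lia.
have [z [hz ez]] := hZ.
have [s [hs es]] := bp_psum hz.
have hu : bp (fun x y => s x (x + 1)) by exact: bp_comp hs bp_x (bp_add bp_x (bp_const 1)).
have hu0 : s (-1) (-1 + 1) = 0 by rewrite addNr -(mulr0n 1) es big_ord0.
have [w [hw ew]] := bp_div1 hu hu0.
have hrec : forall n, Aq a b n.+1 = Aq a b n + w n%:R 0.
  move=> n; rewrite ew; last by rewrite -addr_eq0 natr1 pnatr_eq0.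
  rewrite natr1 es Aq_rec.
  rewrite (eq_bigr (fun k : 'I_n.+1 => Aq a b n + z n%:R k%:R)); last first.
    move=> k _; rewrite -ez; first by rewrite addrC subrK.
    by rewrite /le2 -ltnS ltn_ord.
  rewrite big_split /= sumr_const card_ord mulrDr -[Aq a b n *+ n.+1]mulr_natr mulrCA mulVf ?pnatr_eq0 //.
  by rewrite mulr1 mulrC.
have [t [ht et]] := bp_psum (bp_comp hw bp_y (bp_const 0)).
have hA : PA a b.
  exists (fun x _ => Aq a b 0 + t 0 x); split.
    exact: bp_add (bp_const _) (bp_comp ht (bp_const 0) bp_x).
  elim=> [|n IHn]; first by rewrite -(mulr0n 1) et big_ord0 addr0.
  by rewrite hrec IHn et et big_ord_recr /= addrA.
split => //.
apply: (bpD_ext _ (bpD_add (PA_bpD hA) hZ)) => n j _.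
by rewrite addrC subrK.
Qed.

Lemma main_ind d : forall a b, (a + b <= d)%N -> PA a b /\ PG a b.
Proof.
elim: d => [|d IH] a b h; apply: step => a' b' h'.
  by move: (leq_trans h' h).
by apply: IH; rewrite -ltnS (leq_trans h' h).
Qed.

Lemma mainPAG a b : PA a b /\ PG a b.
Proof. exact: (main_ind (leqnn (a + b))). Qed.

Lemma fall_exp r c : bp c -> exists e : nat -> rat -> rat -> rat,
  (forall a, bp (e a)) /\
  forall x y z, falling (z - c x y) r = \sum_(a < r.+1) e a x y * z ^+ a.
Proof.
move=> hc; elim: r => [|r [e [he ee]]].
  exists (fun a _ _ => if a == 0%N then 1 else 0); split.
    by move=> a; apply: bp_const.
  by move=> x y z; rewrite /falling big_ord0 big_ord1 /= mul1r.
exists (fun a x y => (if a is a'.+1 then e a' x y else 0) -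
   (c x y + r%:R) * (if (a < r.+1)%N then e a x y else 0)); split.
  move=> a; apply: bp_sub.
    by case: a => [|a']; [exact: bp_const | exact: he].
  apply: bp_mul; first exact: bp_add hc (bp_const _).
  by case: (a < r.+1)%N; [exact: he | exact: bp_const].
move=> x y z.
rewrite /falling big_ord_recr /= -/(falling (z - c x y) r) ee.
under eq_bigr => a _ do rewrite mulrBl.
rewrite sumrB.
set S := \sum_(a < r.+1) e a x y * z ^+ a.
have E1 : \sum_(i < r.+2) (match nat_of_ord i with 0%N => 0 | a'.+1 => e a' x y end) * z ^+ i = S * z.
  rewrite big_ord_recl mul0r add0r /S mulr_suml; apply: eq_bigr => a _.
  by rewrite /= /bump leq0n add1n exprSr mulrA.
have E2 : \sum_(i < r.+2) (c x y + r%:R) * (if (i < r.+1)%N then e i x y else 0) * z ^+ i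
    = (c x y + r%:R) * S.
  rewrite big_ord_recr /= ltnn mulr0 mul0r addr0 /S mulr_sumr; apply: eq_bigr => a _.
  by rewrite ltn_ord mulrA.
by rewrite E1 E2 -addrA -opprD mulrBr mulrC (mulrC S).
Qed.


Local Open Scope ring_scope.

Definition mu' (x y : rat) : rat := x - y + (x - 1) * (x - 2) / 4%:R.

Lemma bp_mu : bp mu'.
Proof.
apply: bp_add; first exact: bp_sub bp_x bp_y.
apply: bp_mul (bp_const _); apply: bp_mul.
  exact: bp_sub bp_x (bp_const 1).
exact: bp_sub bp_x (bp_const 2).
Qed.

Lemma cond_last m j (p : 'S_m.+1) :
  [exists k : 'I_m.+1, (val k == m.+1.-1) && (val (p k) == j.+1.-1)] = (val (p ord_max) == j).
Proof.
apply/existsP/idP => [[k /andP[/eqP hk hj]]|hj].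
  by rewrite (_ : ord_max = k) //; apply: val_inj.
by exists ord_max; rewrite /= eqxx hj.
Qed.

Lemma FM_exp r s (e f : nat -> rat -> rat -> rat) :
  (forall x y z, falling (z - mu' x y) r = \sum_(a < r.+1) e a x y * z ^+ a) ->
  (forall x y z, falling (z - mu' x y) s = \sum_(b < s.+1) f b x y * z ^+ b) ->
  forall m j, (j <= m)%N ->
  FM r s m.+1 j.+1 = \sum_(a < r.+1) \sum_(b < s.+1)
     (e a m.+1%:R j.+1%:R * f b m.+1%:R j.+1%:R) * Gq a b m j.
Proof.
move=> ee ef m j hj.
rewrite /FM (eq_bigl (fun p : 'S_m.+1 => val (p ord_max) == j)); last first.
  by move=> p; rewrite cond_last.
have emu : mu m.+1 j.+1 = mu' m.+1%:R j.+1%:R by [].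
rewrite emu /=.
under eq_bigr => p _ do rewrite ee ef mulr_suml.
rewrite exchange_big mulr_sumr; apply: eq_bigr => a _.
under eq_bigr => p _ do rewrite mulr_sumr.
rewrite exchange_big mulr_sumr; apply: eq_bigr => b _.
rewrite /Gq mulr_sumr mulr_sumr mulr_sumr; apply: eq_bigr => p _.
rewrite /St !mulrA.
by rewrite [LHS](ACl (2*4*1*3*5)%AC).
Qed.

Definition D1 (n i : nat) : bool := (1 <= i)%N && (i <= n)%N.

Lemma FM_bpD r s : bpD D1 (FM r s).
Proof.
have [e [he ee]] := fall_exp r bp_mu.
have [f [hf ef]] := fall_exp s bp_mu.
apply: (bpD_ext (f := fun n i => \sum_(a < r.+1) \sum_(b < s.+1)
     (e a n%:R i%:R * f b n%:R i%:R) * Gq a b n.-1 i.-1)).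
  move=> [|m] [|j] //= /andP[_ hj].
  by rewrite (FM_exp ee ef).
apply: (bpD_sum (F := fun a n i => \sum_(b < s.+1)
     (e a n%:R i%:R * f b n%:R i%:R) * Gq a b n.-1 i.-1)) => a _.
apply: (bpD_sum (F := fun b n i =>
     (e a n%:R i%:R * f b n%:R i%:R) * Gq a b n.-1 i.-1)) => b _.
apply: bpD_mul; first by apply: (bpD_of (bp_mul (he a) (hf b))).
have [g [hg eg]] := (mainPAG a b).2.
apply: (bpD_of (bp_comp hg (bp_sub bp_x (bp_const 1)) (bp_sub bp_y (bp_const 1)))).
move=> [|m] [|j] //= /andP[_ hj].
by rewrite eg // -!natr1 !addrK.
Qed.

Theorem mainTheorem6 (r s : nat) :
  (exists P : {poly rat}, forall n : nat, (1 <= n)%N ->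
     ((n`!)%:R)^-1 * (\sum_(p : 'S_n) ((inv_perm p) ^ r * (maj_perm p) ^ s)%N%:R)
       = P.[n%:R])
  /\
  (exists Q : {poly {poly rat}}, forall n i : nat, (1 <= i)%N -> (i <= n)%N ->
     FM r s n i = Q.[(i%:R)%:P].[n%:R]).
Proof.
split.
  have [u [[Q hQ] eu]] := (mainPAG r s).1.
  exists (Q.[0]) => n _.
  have := eu n; rewrite hQ /ev polyC0 => <-.
  rewrite /Aq; congr (_ * _); apply: eq_bigr => p _.
  by rewrite /St natrM !natrX.
have [g [[Q hQ] eg]] := FM_bpD r s.
exists Q => n i h1 h2.
by rewrite eg ?/D1 ?h1 ?h2 // hQ.
Qed.
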